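(* $\mathcal{T}$ is functional if and only if (1) for each relevant pair $\langle m_1,m_2\rangle$ of a state $p\in Q^2$, $\nu(p)$ is a most general equalizer (mge) for $\langle m_1,m_2\rangle$, and (2) for each final and accessible state $f\in F\times F$ of $\mathcal{A}^2$ we have $\nu(f)=\langle e,e\rangle$.
   Context: Let $\mathcal{M}=\langle M,\circ,e\rangle$ be a monoid. A tuple $\langle m_1,\dots,m_n\rangle\in M^n$ is equalizable if there is $\langle x_1,\dots,x_n\rangle\in M^n$ (an equalizer) with $m_1x_1=\dots=m_nx_n$; an equalizer $\langle x_1,\dots,x_n\rangle$ is a most general equalizer (mge) if every equalizer has the form $\langle x_1x,\dots,x_nx\rangle$ for some $x\in M$. $\mathcal{M}$ is an mge monoid if it has right cancellation ($ac=bc\Rightarrow a=b$) and every equalizable pair has an mge. Let $\eta:M^2\to M^2$ be a function that returns an mge $\eta(m,m')$ for each equalizable pair $\langle m,m'\rangle$. Let $\mathcal{T}=\langle \Sigma^*\times\mathcal{M},Q,I,F,\Delta\rangle$ be a trimmed (every state accessible and co-accessible) monoidal finite-state transducer with output in the mge monoid $\mathcal{M}$, where $\Delta\subseteq Q\times((\Sigma\cup\{\varepsilon\})\times M)\times Q$ and $\Delta^*$ is its generalized transition relation; $\mathcal{T}$ is functional if its accepted relation $L(\mathcal{T})\subseteq\Sigma^*\times M$ is a function. Let $\mathcal{A}^2=\langle \mathcal{M}\times\mathcal{M},Q\times Q,I\times I,F\times F,\Delta_2\rangle$ be a squared output automaton for $\mathcal{T}$, i.e. $\Delta_2$ is finite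 and $\langle\langle p_1,p_2\rangle,\langle m,n\rangle,\langle q_1,q_2\rangle\rangle\in\Delta_2^*$ iff there is $u\in\Sigma^*$ with $\langle p_1,\langle u,m\rangle,q_1\rangle\in\Delta^*$ and $\langle p_2,\langle u,n\rangle,q_2\rangle\in\Delta^*$. For a state $\langle q_1,q_2\rangle$ lying on a successful path of $\mathcal{A}^2$, a pair $\langle m_1,m_2\rangle$ is a relevant pair for $\langle q_1,q_2\rangle$ if $\langle\langle i_1,i_2\rangle,\langle m_1,m_2\rangle,\langle q_1,q_2\rangle\rangle\in\Delta_2^*$ for some $\langle i_1,i_2\rangle\in I\times I$. Let $\langle\rho,\nu\rangle$ be a valuation of $\mathcal{A}^2$: $\rho,\nu:Q^2\to M^2$ are partial functions where $\rho(q)$ is some chosen relevant pair for $q$ if one exists (undefined otherwise), with $\rho(q)=\langle e,e\rangle$ for $q\in I^2$ having a relevant pair; and $\nu(q)=\langle e,e\rangle$ if $\rho(q)$ is defined and of the form $\langle m,m\rangle$, $\nu(q)=\eta(\rho(q))$ if $\rho(q)$ is defined and equalizable, and $\nu(q)$ undefined otherwise. *)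

(* Defs.v *)
From mathcomp Require Import all_boot.
From Stdlib Require List.

Set Implicit Arguments.
Unset Strict Implicit.
Unset Printing Implicit Defensive.

Definition monoid_laws (M : Type) (op : M -> M -> M) (e : M) : Prop :=
  (forall a b c, op a (op b c) = op (op a b) c) /\
  (forall a, op e a = a) /\ (forall a, op a e = a).

Definition right_cancel (M : Type) (op : M -> M -> M) : Prop :=
  forall a b c, op a c = op b c -> a = b.

Definition is_equalizer (M : Type) (op : M -> M -> M) (m1 m2 : M) (x : M * M) : Prop :=
  op m1 x.1 = op m2 x.2.

Definition equalizable (M : Type) (op : M -> M -> M) (m1 m2 : M) : Prop :=
  exists x : M * M, is_equalizer op m1 m2 x.

Definition is_mge (M : Type) (op : M -> M -> M) (m1 m2 : M) (x : M * M) : Prop :=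
  is_equalizer op m1 m2 x /\
  forall y : M * M, is_equalizer op m1 m2 y ->
    exists z : M, y = (op x.1 z, op x.2 z).

Definition mge_monoid (M : Type) (op : M -> M -> M) (e : M) : Prop :=
  monoid_laws op e /\ right_cancel op /\
  forall m1 m2, equalizable op m1 m2 -> exists x, is_mge op m1 m2 x.

(* Generalized transition relation D^* of a monoidal automaton with transition
   labels in the monoid <N, opN, eN> and finite transition set D. *)
Inductive mstar (S N : Type) (opN : N -> N -> N) (eN : N) (D : list (S * N * S))
  : S -> N -> S -> Prop :=
| mstar_refl p : mstar opN eN D p eN p
| mstar_step p n q n' r :
    List.In (p, n, q) D -> mstar opN eN D q n' r -> mstar opN eN D p (opN n n') r.

Definition pair_op (A B : Type) (opA : A -> A -> A) (opB : B -> B -> B)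
  (x y : A * B) : A * B := (opA x.1 y.1, opB x.2 y.2).

(* input letter or epsilon, as a word *)
Definition word_of (Sigma : Type) (a : option Sigma) : seq Sigma :=
  if a is Some x then [:: x] else [::].

(* transitions of the transducer, labels seen in the monoid Sigma^* x M *)
Definition lift_delta (Sigma Q M : Type) (Delta : list (Q * (option Sigma * M) * Q))
  : list (Q * (seq Sigma * M) * Q) :=
  List.map (fun t => (t.1.1, (word_of t.1.2.1, t.1.2.2), t.2)) Delta.

Definition T_star (Sigma Q : finType) (M : Type) (op : M -> M -> M) (e : M)
  (Delta : list (Q * (option Sigma * M) * Q)) (p : Q) (l : seq Sigma * M) (q : Q) : Prop :=
  mstar (pair_op cat op) ([::], e) (lift_delta Delta) p l q.

Definition trimmed (Sigma Q : finType) (M : Type) (op : M -> M -> M) (e : M)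
  (I F : {set Q}) (Delta : list (Q * (option Sigma * M) * Q)) : Prop :=
  forall q : Q,
    (exists i l, i \in I /\ T_star op e Delta i l q) /\
    (exists f l, f \in F /\ T_star op e Delta q l f).

Definition accepted (Sigma Q : finType) (M : Type) (op : M -> M -> M) (e : M)
  (I F : {set Q}) (Delta : list (Q * (option Sigma * M) * Q)) (u : seq Sigma) (m : M) : Prop :=
  exists i f, [/\ i \in I, f \in F & T_star op e Delta i (u, m) f].

Definition functional (Sigma Q : finType) (M : Type) (op : M -> M -> M) (e : M)
  (I F : {set Q}) (Delta : list (Q * (option Sigma * M) * Q)) : Prop :=
  forall u m m', accepted op e I F Delta u m -> accepted op e I F Delta u m' -> m = m'.

Definition A2_star (Q : finType) (M : Type) (op : M -> M -> M) (e : M)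
  (Delta2 : list ((Q * Q) * (M * M) * (Q * Q))) (p : Q * Q) (mn : M * M) (q : Q * Q) : Prop :=
  mstar (pair_op op op) (e, e) Delta2 p mn q.

Definition squared_output_automaton (Sigma Q : finType) (M : Type) (op : M -> M -> M) (e : M)
  (Delta : list (Q * (option Sigma * M) * Q))
  (Delta2 : list ((Q * Q) * (M * M) * (Q * Q))) : Prop :=
  forall (p1 p2 q1 q2 : Q) (m n : M),
    A2_star op e Delta2 (p1, p2) (m, n) (q1, q2) <->
    exists u : seq Sigma, T_star op e Delta p1 (u, m) q1 /\ T_star op e Delta p2 (u, n) q2.

Definition A2_accessible (Q : finType) (M : Type) (op : M -> M -> M) (e : M)
  (I : {set Q}) (Delta2 : list ((Q * Q) * (M * M) * (Q * Q))) (q : Q * Q) : Prop :=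
  exists i mn, [/\ i.1 \in I, i.2 \in I & A2_star op e Delta2 i mn q].

Definition A2_coaccessible (Q : finType) (M : Type) (op : M -> M -> M) (e : M)
  (F : {set Q}) (Delta2 : list ((Q * Q) * (M * M) * (Q * Q))) (q : Q * Q) : Prop :=
  exists f mn, [/\ f.1 \in F, f.2 \in F & A2_star op e Delta2 q mn f].

Definition on_successful_path (Q : finType) (M : Type) (op : M -> M -> M) (e : M)
  (I F : {set Q}) (Delta2 : list ((Q * Q) * (M * M) * (Q * Q))) (q : Q * Q) : Prop :=
  A2_accessible op e I Delta2 q /\ A2_coaccessible op e F Delta2 q.

Definition relevant_pair (Q : finType) (M : Type) (op : M -> M -> M) (e : M)
  (I F : {set Q}) (Delta2 : list ((Q * Q) * (M * M) * (Q * Q)))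
  (q : Q * Q) (mp : M * M) : Prop :=
  on_successful_path op e I F Delta2 q /\
  exists i : Q * Q, [/\ i.1 \in I, i.2 \in I & A2_star op e Delta2 i mp q].

(* <rho, nu> is a valuation of A^2 (partial functions as option-valued) *)
Definition valuation (Q : finType) (M : Type) (op : M -> M -> M) (e : M)
  (I F : {set Q}) (Delta2 : list ((Q * Q) * (M * M) * (Q * Q)))
  (eta : M -> M -> M * M) (rho nu : Q * Q -> option (M * M)) : Prop :=
  (forall q, match rho q with
             | Some mp => relevant_pair op e I F Delta2 q mp
             | None => ~ (exists mp, relevant_pair op e I F Delta2 q mp)
             end) /\
  (forall q, q.1 \in I -> q.2 \in I ->
     (exists mp, relevant_pair op e I F Delta2 q mp) -> rho q = Some (e, e)) /\
  (forall q m, rho q = Some (m, m) -> nu q = Some (e, e)) /\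
  (forall q m m', rho q = Some (m, m') -> m <> m' -> equalizable op m m' ->
     nu q = Some (eta m m')) /\
  (forall q m m', rho q = Some (m, m') -> ~ equalizable op m m' -> nu q = None) /\
  (forall q, rho q = None -> nu q = None).

(* Main.v *)
Require Import Defs.
From mathcomp Require Import all_boot.
From Stdlib Require Import Classical.
Set Implicit Arguments.

Lemma mstar_trans (S N : Type) (opN : N -> N -> N) (eN : N) (D : list (S * N * S))
  (Hass : forall a b c, opN a (opN b c) = opN (opN a b) c)
  (Hl : forall a, opN eN a = a) p n q n' r :
  mstar opN eN D p n q -> mstar opN eN D q n' r -> mstar opN eN D p (opN n n') r.
Proof.
elim=> [p0|p0 n0 q0 n1 r0 Hin _ IH] H.
  by rewrite Hl.
rewrite -Hass; apply: mstar_step Hin _; exact: IH.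
Qed.

Lemma A2_trans (Q : finType) (M : Type) (op : M -> M -> M) (e : M)
  (HM : monoid_laws op e) (D : list ((Q * Q) * (M * M) * (Q * Q))) p a b q c d r :
  A2_star op e D p (a, b) q -> A2_star op e D q (c, d) r ->
  A2_star op e D p (op a c, op b d) r.
Proof.
case: HM => Hass [Hl _] H1 H2.
have := @mstar_trans _ _ (pair_op op op) (e, e) D _ _ p (a, b) q (c, d) r H1 H2.
apply.
- by move=> [x1 x2] [y1 y2] [z1 z2]; rewrite /pair_op /= !Hass.
- by move=> [x1 x2]; rewrite /pair_op /= !Hl.
Qed.

Lemma mge_transfer (M : Type) (op : M -> M -> M) (e : M) (HM : mge_monoid op e)
  n1 n2 m1 m2 a b X :
  is_mge op n1 n2 X -> op n1 a = op n2 b -> op m1 a = op m2 b -> is_mge op m1 m2 X.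
Proof.
case: X => X1 X2.
case: HM => [[Hass [Hl Hr]] [Hrc Hex]] [HX HXg] Hn Hm.
have [z Hz] := HXg (a, b) Hn.
case: Hz => Ha Hb.
have HXm : is_equalizer op m1 m2 (X1, X2).
  apply: (Hrc _ _ z); rewrite /is_equalizer -!Hass -Ha -Hb; exact: Hm.
have [[Y1 Y2] [HY HYg]] := Hex m1 m2 (ex_intro _ (a, b) Hm).
have [z' [Ha' Hb']] := HYg (a, b) Hm.
have HYn : is_equalizer op n1 n2 (Y1, Y2).
  apply: (Hrc _ _ z'); rewrite /is_equalizer -!Hass -Ha' -Hb'; exact: Hn.
have [w [Hw1 Hw2]] := HXg _ HYn.
split; first exact: HXm.
move=> y Hy.
have [t ->] := HYg y Hy.
exists (op w t).
by rewrite /= Hw1 Hw2 -!Hass.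
Qed.

Lemma mge_diag (M : Type) (op : M -> M -> M) (e : M) (HM : mge_monoid op e) n :
  is_mge op n n (e, e).
Proof.
case: HM => [[Hass [Hl Hr]] [Hrc Hex]].
split; first by [].
move=> [y1 y2] Hy.
have [[x1 x2] [Hx Hxg]] := Hex n n (ex_intro _ (e, e) (erefl _)).
have [z [Hz1 Hz2]] := Hxg (e, e) (erefl _).
have Hx12 : x1 = x2 by apply: (Hrc _ _ z); rewrite /= in Hz1 Hz2; rewrite -Hz1 -Hz2.
have [t [Ht1 Ht2]] := Hxg (y1, y2) Hy.
exists y1; rewrite /= in Ht1 Ht2 *.
by rewrite !Hl Ht1 Ht2 Hx12.
Qed.

Theorem lemma7 (Sigma Q : finType) (M : Type) (op : M -> M -> M) (e : M)
  (HM : mge_monoid op e)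
  (eta : M -> M -> M * M)
  (Heta : forall m m', equalizable op m m' -> is_mge op m m' (eta m m'))
  (I F : {set Q}) (Delta : list (Q * (option Sigma * M) * Q))
  (Htrim : trimmed op e I F Delta)
  (Delta2 : list ((Q * Q) * (M * M) * (Q * Q)))
  (HA2 : squared_output_automaton op e Delta Delta2)
  (rho nu : Q * Q -> option (M * M))
  (Hval : valuation op e I F Delta2 eta rho nu) :
  functional op e I F Delta <->
  ((forall (p : Q * Q) (mp : M * M), relevant_pair op e I F Delta2 p mp ->
      exists x, nu p = Some x /\ is_mge op mp.1 mp.2 x) /\
   (forall f : Q * Q, f.1 \in F -> f.2 \in F -> A2_accessible op e I Delta2 f ->
      nu f = Some (e, e))).
Proof.
have HM0 := HM.
case: HM0 => [[Hass [Hl Hr]] [Hrc Hex]].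
case: Hval => Hrho [Hrho0 [Hnu1 [Hnu2 [Hnu3 Hnu4]]]].
split.
- move=> Hfun.
  have acc : forall (i f : Q * Q) (mn : M * M), i.1 \in I -> i.2 \in I ->
      f.1 \in F -> f.2 \in F -> A2_star op e Delta2 i mn f -> mn.1 = mn.2.
    move=> [i1 i2] [f1 f2] [m n] /= Hi1 Hi2 Hf1 Hf2 /HA2 [u [H1 H2]].
    apply: (Hfun u).
      by exists i1, f1; split.
    by exists i2, f2; split.
  split.
  + move=> p [m1 m2] Hrel.
    have Hrel0 := Hrel.
    case: Hrel => [[Hac [f [[a b] [Hf1 Hf2 Hpf]]]] [i [Hi1 Hi2 Hi]]] /=.
    have Hm : op m1 a = op m2 b.
      exact: (acc i f (op m1 a, op m2 b) Hi1 Hi2 Hf1 Hf2 (A2_trans HM.1 Hi Hpf)).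
    have := Hrho p.
    case Erho: (rho p) => [[n1 n2]|]; last first.
      by move=> Hn; exfalso; apply: Hn; exists (m1, m2).
    case=> _ [j [Hj1 Hj2 Hj]].
    have Hn : op n1 a = op n2 b.
      exact: (acc j f (op n1 a, op n2 b) Hj1 Hj2 Hf1 Hf2 (A2_trans HM.1 Hj Hpf)).
    have [X [HnuX HX]] : exists X, nu p = Some X /\ is_mge op n1 n2 X.
      case: (classic (n1 = n2)) => [E|NE].
        subst n2; exists (e, e); split; first exact: (Hnu1 _ n1).
        exact: mge_diag.
      have Heq : equalizable op n1 n2 by exists (a, b).
      exists (eta n1 n2); split; first exact: (Hnu2 _ _ _ Erho NE Heq).
      exact: Heta.
    exists X; split => //.
    exact: (@mge_transfer M op e HM n1 n2 m1 m2 a b X HX Hn Hm).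
  + move=> f Hf1 Hf2 Hacc.
    have := Hrho f.
    case Erho: (rho f) => [[m m']|]; last first.
      move=> Hn; exfalso; apply: Hn.
      case: Hacc => i [mn [Hi1 Hi2 Hi]].
      exists mn; split; last by exists i; split.
      split; first by exists i, mn; split.
      by exists f, (e, e); split => //; apply: mstar_refl.
    case=> _ [j [Hj1 Hj2 Hj]].
    have E : m = m' by exact: (acc j f (m, m') Hj1 Hj2 Hf1 Hf2 Hj).
    subst m'; exact: (Hnu1 _ m).
- move=> [H1 H2] u m m' [i [f [Hi Hf Ht]]] [i' [f' [Hi' Hf' Ht']]].
  have HA : A2_star op e Delta2 (i, i') (m, m') (f, f').
    by apply/HA2; exists u; split.
  have Hrel : relevant_pair op e I F Delta2 (f, f') (m, m').
    split; last by exists (i, i'); split.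
    split; first by exists (i, i'), (m, m'); split.
    by exists (f, f'), (e, e); split => //; apply: mstar_refl.
  have [x [Hx Hmge]] := H1 _ _ Hrel.
  have := H2 (f, f') Hf Hf' (ex_intro _ (i, i') (ex_intro _ (m, m') (And3 Hi Hi' HA))).
  rewrite Hx => -[Ex]; subst x.
  case: Hmge => /= Heq _.
  by rewrite /is_equalizer /= !Hr in Heq.
Qed.
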